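(* Let $\mathcal{M}$ be a space of closed smooth Riemannian manifolds, considered up to isospectrality, and let $\gamma$ be a real number with $\sup\{\dim X: X\in\mathcal{M}\}<2\gamma$. For $X_1,X_2\in\mathcal{M}$ define \[ d(X_1,X_2):=\sup_{\gamma<s<\gamma+1}\left|\log\left|\frac{\zeta_{X_1}(s)}{\zeta_{X_2}(s)}\right|\right|, \] where $\Re(s)>\gamma$ is a common half plane of convergence of the spectral zeta functions of $X_1$ and $X_2$. Then $d$ defines a metric on $\mathcal{M}$.
   Context: Two Riemannian manifolds are isospectral if their Laplace–Beltrami operators have the same spectrum with multiplicities. For a closed smooth Riemannian manifold $X$ with Laplace–Beltrami operator $\Delta_X$, the spectral zeta function is $\zeta_X(s)=\mathrm{tr}(\Delta_X^{-s})=\sum_{\lambda}\lambda^{-s}$, the sum running over the nonzero eigenvalues of $\Delta_X$ counted with multiplicity; it converges absolutely for $\Re(s)>\dim(X)/2$. *)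

(* Defs.v *)
From Stdlib Require Import Reals.
From Coquelicot Require Import Coquelicot.
Open Scope R_scope.

Record SpecManifold := mkSpecManifold {
  sm_dim : nat;
  sm_eig : nat -> R
}.

(* Properties every such spectrum has (Weyl law consequence: the
   zeta series converges absolutely for s > dim/2). *)
Definition admissible (X : SpecManifold) : Prop :=
  (1 <= sm_dim X)%nat /\
  (forall k, 0 < sm_eig X k) /\
  (forall k, sm_eig X k <= sm_eig X (S k)) /\
  (forall s : R, INR (sm_dim X) / 2 < s ->
     ex_series (fun k => Rpower (sm_eig X k) (- s))).

(* Spectral zeta function zeta_X(s) = sum over nonzero eigenvalues of lambda^(-s), s real. *)
Definition zeta (X : SpecManifold) (s : R) : R :=
  Series (fun k => Rpower (sm_eig X k) (- s)).

(* Isospectrality: same spectrum with multiplicities (the zero eigenvalue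
   has multiplicity 1 for connected manifolds). *)
Definition isospectral (X Y : SpecManifold) : Prop :=
  forall k, sm_eig X k = sm_eig Y k.

Definition zeta_dist (gamma : R) (X1 X2 : SpecManifold) : Rbar :=
  Lub_Rbar (fun r => exists s, gamma < s < gamma + 1 /\
                      r = Rabs (ln (Rabs (zeta X1 s / zeta X2 s)))).

(* Main.v *)
Require Import Defs.
From Stdlib Require Import Reals Lra Lia Factorial.
From Coquelicot Require Import Coquelicot.
Open Scope R_scope.

Lemma ex_series_R (a b : nat -> R) : (forall n, Rabs (a n) <= b n) -> ex_series b -> ex_series a.
Proof. intros H Hb. apply (ex_series_le a b); [intro n; exact (H n)| exact Hb]. Qed.

Lemma loc0 (P : R -> Prop) (e : posreal) : (forall t, Rabs t < e -> P t) -> locally 0 P.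
Proof. intros H. exists e. intros y Hy. apply H. unfold ball in Hy; simpl in Hy. unfold AbsRing_ball, abs, minus, plus, opp in Hy; simpl in Hy. rewrite Ropp_0, Rplus_0_r in Hy. exact Hy. Qed.

Lemma fact_pos n : 0 < INR (fact n).
Proof. apply INR_fact_lt_0. Qed.

Lemma pow_fact_le_exp (M : R) (m : nat) : 0 <= M -> M ^ m / INR (fact m) <= exp M.
Proof.
  intros HM. eapply Rle_trans; [| apply (exp_ge_taylor M m HM)].
  destruct m as [|m]. simpl; lra. change (sum_f_R0 ?f (S m)) with (sum_f_R0 f m + f (S m)). cbv beta.
  assert (0 <= sum_f_R0 (fun k => M ^ k / INR (fact k)) m).
  { apply cond_pos_sum. intro k. unfold Rdiv. apply Rmult_le_pos. apply pow_le; lra.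
    left; apply Rinv_0_lt_compat, fact_pos. }
  lra.
Qed.

Lemma exp_series y : is_series (fun n => / INR (fact n) * y ^ n) (exp y).
Proof. apply is_pseries_R. apply is_exp_Reals. Qed.

Definition P (N : nat) (y : R) := sum_f_R0 (fun n => / INR (fact n) * y ^ n) N.

Lemma geom_scal (c q : R) : Rabs q < 1 -> ex_series (fun k => c * q ^ k) /\ Series (fun k => c * q ^ k) = c / (1 - q).
Proof.
  intros Hq. split.
  - apply (ex_series_scal_l c (fun k => q ^ k)). apply ex_series_geom; auto.
  - assert (H : Series (fun k => q ^ k) = / (1 - q)) by (apply is_series_unique, is_series_geom; auto).
    rewrite Series_scal_l. change (Series (pow q)) with (Series (fun k => q ^ k)). rewrite H. reflexivity.
Qed.

Lemma exp_tail (y q M : R) (N : nat) : 0 <= q < 1 -> 0 <= M -> Rabs y <= q * M ->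
  Rabs (exp y - P N y) <= q ^ (S N) * exp M / (1 - q).
Proof.
  intros Hq HM Hy.
  set (b := fun n => / INR (fact n) * y ^ n).
  assert (Hb : is_series b (exp y)) by apply exp_series.
  assert (Hex : ex_series b) by (exists (exp y); exact Hb).
  assert (HS : Series b = exp y) by (apply is_series_unique; exact Hb).
  rewrite (Series_incr_n b (S N)) in HS by (lia || exact Hex). simpl pred in HS.
  assert (E : exp y - P N y = Series (fun k => b (S N + k)%nat)).
  { unfold P. fold b. lra. }
  rewrite E.
  assert (Hqa : Rabs q < 1) by (rewrite Rabs_pos_eq; lra).
  destruct (geom_scal (q ^ (S N) * exp M) q Hqa) as [Hg1 Hg2].
  assert (Hbnd : forall k, Rabs (b (S N + k)%nat) <= q ^ (S N) * exp M * q ^ k).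
  { intro k. unfold b. set (m := (S N + k)%nat).
    rewrite Rabs_mult, Rabs_inv, (Rabs_pos_eq (INR (fact m))) by (left; apply fact_pos).
    rewrite <- RPow_abs.
    replace (q ^ S N * exp M * q ^ k) with (q ^ m * exp M) by (unfold m; rewrite pow_add; ring).
    apply Rle_trans with (/ INR (fact m) * (q * M) ^ m).
    { apply Rmult_le_compat_l. left; apply Rinv_0_lt_compat, fact_pos.
      apply pow_incr. split; [apply Rabs_pos| exact Hy]. }
    rewrite Rpow_mult_distr.
    replace (/ INR (fact m) * (q ^ m * M ^ m)) with (q ^ m * (M ^ m / INR (fact m))) by (unfold Rdiv; ring).
    apply Rmult_le_compat_l. apply pow_le; lra. apply pow_fact_le_exp; exact HM. }
  eapply Rle_trans. apply Series_Rabs.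
  { apply (ex_series_R _ _ (fun k => Rle_trans _ _ _ (Req_le _ _ (Rabs_Rabsolu _)) (Hbnd k))). exact Hg1. }
  eapply Rle_trans. apply (Series_le _ (fun k => q ^ S N * exp M * q ^ k)).
  { intro k; split; [apply Rabs_pos | apply Hbnd]. } exact Hg1.
  rewrite Hg2. lra.
Qed.
Definition coef (a : nat -> R) (s0 : R) (n : nat) : R :=
  Series (fun k => exp (- s0 * ln (a k)) * (/ INR (fact n) * (- ln (a k)) ^ n)).

Definition Zf (a : nat -> R) (s : R) : R := Series (fun k => Rpower (a k) (- s)).

Definition Wt (a : nat -> R) (s0 rho : R) (k : nat) : R :=
  exp (- s0 * ln (a k)) * exp (rho * Rabs (ln (a k))).

Section PS.
Variables (a : nat -> R) (sig : R).
Hypothesis Ha : forall k, 0 < a k.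
Hypothesis Hs : forall s, sig < s -> ex_series (fun k => Rpower (a k) (- s)).

Lemma Wt_ex s0 rho : 0 <= rho -> sig < s0 - rho -> ex_series (Wt a s0 rho).
Proof.
  intros Hr Hsr.
  apply (ex_series_R _ (fun k => Rpower (a k) (- (s0 - rho)) + Rpower (a k) (- (s0 + rho)))).
  - intro k. unfold Wt, Rpower. rewrite Rabs_pos_eq by (apply Rmult_le_pos; left; apply exp_pos).
    rewrite <- exp_plus. destruct (Rcase_abs (ln (a k))) as [Hl|Hl].
    + rewrite Rabs_left by exact Hl.
      replace (- s0 * ln (a k) + rho * - ln (a k)) with (- (s0 + rho) * ln (a k)) by ring.
      pose proof (exp_pos (- (s0 - rho) * ln (a k))). lra.
    + rewrite Rabs_pos_eq by lra.
      replace (- s0 * ln (a k) + rho * ln (a k)) with (- (s0 - rho) * ln (a k)) by ring.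
      pose proof (exp_pos (- (s0 + rho) * ln (a k))). lra.
  - apply (ex_series_plus (fun k => Rpower (a k) (- (s0 - rho))) (fun k => Rpower (a k) (- (s0 + rho)))).
    apply Hs; lra. apply Hs; lra.
Qed.

Lemma term_bound s0 rho n k : 0 < rho ->
  Rabs (exp (- s0 * ln (a k)) * (/ INR (fact n) * (- ln (a k)) ^ n)) <= / rho ^ n * Wt a s0 rho k.
Proof.
  intros Hr. unfold Wt. set (L := ln (a k)).
  rewrite Rabs_mult, (Rabs_pos_eq (exp _)) by (left; apply exp_pos).
  rewrite Rabs_mult, Rabs_inv, (Rabs_pos_eq (INR (fact n))) by (left; apply fact_pos).
  rewrite <- RPow_abs, Rabs_Ropp.
  assert (Hp : 0 < rho ^ n) by (apply pow_lt; lra).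
  pose proof (pow_fact_le_exp (rho * Rabs L) n (Rmult_le_pos _ _ (Rlt_le _ _ Hr) (Rabs_pos L))) as H.
  rewrite Rpow_mult_distr in H.
  assert (E : / INR (fact n) * Rabs L ^ n = / rho ^ n * (rho ^ n * Rabs L ^ n / INR (fact n))).
  { field. split; [apply Rgt_not_eq, fact_pos | lra]. }
  rewrite E.
  pose proof (exp_pos (- s0 * L)).
  replace (/ rho ^ n * (exp (- s0 * L) * exp (rho * Rabs L))) with (exp (- s0 * L) * (/ rho ^ n * exp (rho * Rabs L))) by ring.
  apply Rmult_le_compat_l. lra.
  apply Rmult_le_compat_l. left; apply Rinv_0_lt_compat; exact Hp. exact H.
Qed.

Lemma coef_ex s0 rho n : 0 < rho -> sig < s0 - rho ->
  ex_series (fun k => exp (- s0 * ln (a k)) * (/ INR (fact n) * (- ln (a k)) ^ n)).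
Proof.
  intros Hr Hsr. apply (ex_series_R _ (fun k => / rho ^ n * Wt a s0 rho k)).
  intro k; apply term_bound; exact Hr.
  apply (ex_series_scal_l (/ rho ^ n) (Wt a s0 rho)). apply Wt_ex; lra.
Qed.

Lemma coef_bound s0 rho n : 0 < rho -> sig < s0 - rho ->
  Rabs (coef a s0 n) <= / rho ^ n * Series (Wt a s0 rho).
Proof.
  intros Hr Hsr. unfold coef.
  assert (HW : ex_series (Wt a s0 rho)) by (apply Wt_ex; lra).
  eapply Rle_trans. apply Series_Rabs.
  { apply (ex_series_R _ (fun k => / rho ^ n * Wt a s0 rho k)).
    intro k; rewrite Rabs_Rabsolu; apply term_bound; exact Hr.
    apply (ex_series_scal_l (/ rho ^ n) (Wt a s0 rho)). exact HW. }
  rewrite <- Series_scal_l. apply Series_le.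
  intro k; split; [apply Rabs_pos| apply term_bound; exact Hr].
  apply (ex_series_scal_l (/ rho ^ n) (Wt a s0 rho)). exact HW.
Qed.

End PS.

Lemma Series_nonneg (b : nat -> R) : (forall k, 0 <= b k) -> ex_series b -> 0 <= Series b.
Proof.
  intros H Hb. assert (E : Series (fun k => 0 * b k) = 0) by (rewrite Series_scal_l; ring).
  rewrite <- E. apply Series_le. intro k; split; [lra| rewrite Rmult_0_l; apply H]. exact Hb.
Qed.

Lemma sum_swap (f : nat -> nat -> R) : (forall n, ex_series (f n)) -> forall N,
  ex_series (fun k => sum_f_R0 (fun n => f n k) N) /\
  sum_f_R0 (fun n => Series (f n)) N = Series (fun k => sum_f_R0 (fun n => f n k) N).
Proof.
  intros Hf N. induction N as [|N [IH1 IH2]].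
  - simpl. split; [exact (Hf 0%nat) | reflexivity].
  - simpl. split.
    + apply (ex_series_plus (fun k => sum_f_R0 (fun n => f n k) N) (f (S N))); auto.
    + rewrite IH2. rewrite <- Series_plus; auto.
Qed.

Section PS2.
Variables (a : nat -> R) (sig : R).
Hypothesis Ha : forall k, 0 < a k.
Hypothesis Hs : forall s, sig < s -> ex_series (fun k => Rpower (a k) (- s)).

Lemma PS_main s0 rho h : 0 < rho -> sig < s0 - rho -> Rabs h < rho ->
  is_pseries (coef a s0) h (Zf a (s0 + h)).
Proof.
  intros Hr Hsr Hh.
  apply is_pseries_R. apply is_series_Reals. intros eps Heps.
  set (q := Rabs h / rho).
  assert (Hq : 0 <= q < 1).
  { unfold q. split. apply Rmult_le_pos; [apply Rabs_pos| left; apply Rinv_0_lt_compat; lra].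
    apply (Rmult_lt_reg_r rho); [lra|]. unfold Rdiv. rewrite Rmult_assoc, Rinv_l by lra. lra. }
  set (K := Series (Wt a s0 rho)).
  assert (HW : ex_series (Wt a s0 rho)) by (apply (Wt_ex a sig); auto; lra).
  assert (HK : 0 <= K).
  { apply Series_nonneg; auto. intro k; unfold Wt; apply Rmult_le_pos; left; apply exp_pos. }
  set (f := fun n k => exp (- s0 * ln (a k)) * (/ INR (fact n) * (- ln (a k)) ^ n) * h ^ n).
  assert (Hf : forall n, ex_series (f n)).
  { intro n. unfold f. apply ex_series_scal_r. apply (coef_ex a sig) with (rho := rho); auto. }
  assert (Hcf : forall n, coef a s0 n * h ^ n = Series (f n)).
  { intro n. unfold f, coef. rewrite Series_scal_r. reflexivity. }
  set (w := fun k => exp (- s0 * ln (a k))).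
  set (y := fun k => - ln (a k) * h).
  assert (Hsum : forall N, sum_f_R0 (fun n => coef a s0 n * h ^ n) N = Series (fun k => w k * P N (y k))
     /\ ex_series (fun k => w k * P N (y k))).
  { intro N. destruct (sum_swap f Hf N) as [H1 H2].
    assert (E : forall k, sum_f_R0 (fun n => f n k) N = w k * P N (y k)).
    { intro k. unfold P. rewrite scal_sum. apply sum_eq. intros i _. unfold f, w, y.
      rewrite Rpow_mult_distr. ring. }
    split.
    - rewrite (sum_eq _ (fun n => Series (f n)) N) by (intros; apply Hcf). rewrite H2. apply Series_ext. exact E.
    - apply (ex_series_ext _ _ E H1). }
  assert (HZ : Zf a (s0 + h) = Series (fun k => w k * exp (y k))).
  { unfold Zf. apply Series_ext. intro k. unfold Rpower, w, y. rewrite <- exp_plus. f_equal. ring. }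
  assert (HZex : ex_series (fun k => w k * exp (y k))).
  { apply (ex_series_ext (fun k => Rpower (a k) (- (s0 + h)))).
    intro k. unfold Rpower, w, y. rewrite <- exp_plus. f_equal. ring.
    apply Hs. apply Rabs_def2 in Hh. lra. }
  assert (Hbnd : forall N, Rabs (sum_f_R0 (fun n => coef a s0 n * h ^ n) N - Zf a (s0 + h)) <= q ^ (S N) / (1 - q) * K).
  { intro N. destruct (Hsum N) as [H1 H2]. rewrite H1, HZ.
    rewrite Rabs_minus_sym. rewrite <- Series_minus by auto.
    assert (Tb : forall k, Rabs (w k * exp (y k) - w k * P N (y k)) <= q ^ (S N) / (1 - q) * Wt a s0 rho k).
    { intro k. rewrite <- Rmult_minus_distr_l, Rabs_mult, (Rabs_pos_eq (w k)) by (left; apply exp_pos).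
      unfold Wt. fold (w k).
      assert (T := exp_tail (y k) q (rho * Rabs (ln (a k))) N Hq
                     (Rmult_le_pos _ _ (Rlt_le _ _ Hr) (Rabs_pos _))).
      assert (Hy : Rabs (y k) <= q * (rho * Rabs (ln (a k)))).
      { unfold y, q. rewrite Rabs_mult, Rabs_Ropp. right. field. lra. }
      specialize (T Hy).
      pose proof (exp_pos (- s0 * ln (a k))). fold (w k) in H.
      replace (q ^ S N / (1 - q) * (w k * exp (rho * Rabs (ln (a k)))))
        with (w k * (q ^ S N * exp (rho * Rabs (ln (a k))) / (1 - q))) by (field; lra).
      apply Rmult_le_compat_l; lra. }
    assert (Hex2 : ex_series (fun k => q ^ S N / (1 - q) * Wt a s0 rho k)).
    { apply (ex_series_scal_l (q ^ S N / (1 - q)) (Wt a s0 rho)). exact HW. }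
    eapply Rle_trans. apply Series_Rabs.
    { apply (ex_series_R _ _ (fun k => Rle_trans _ _ _ (Req_le _ _ (Rabs_Rabsolu _)) (Tb k))). exact Hex2. }
    unfold K. rewrite <- Series_scal_l. apply Series_le; [|exact Hex2].
    intro k; split; [apply Rabs_pos| apply Tb]. }
  assert (Hq1 : Rabs q < 1) by (rewrite Rabs_pos_eq; lra).
  assert (Hy0 : 0 < eps * (1 - q) / (K + 1)).
  { apply Rmult_lt_0_compat. apply Rmult_lt_0_compat; lra. apply Rinv_0_lt_compat; lra. }
  destruct (pow_lt_1_zero q Hq1 _ Hy0) as [N0 HN0].
  exists N0. intros n Hn. unfold Rdist.
  eapply Rle_lt_trans. apply Hbnd.
  assert (Hqn := HN0 (S n) ltac:(lia)).
  rewrite Rabs_pos_eq in Hqn by (apply pow_le; lra).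
  apply Rle_lt_trans with (eps * (1 - q) / (K + 1) / (1 - q) * K).
  { apply Rmult_le_compat_r; [exact HK|]. unfold Rdiv. apply Rmult_le_compat_r.
    left; apply Rinv_0_lt_compat; lra. lra. }
  replace (eps * (1 - q) / (K + 1) / (1 - q) * K) with (eps * (K / (K + 1))) by (field; lra).
  assert (K / (K + 1) < 1).
  { apply (Rmult_lt_reg_r (K + 1)); [lra|]. unfold Rdiv. rewrite Rmult_assoc, Rinv_l by lra. lra. }
  nra.
Qed.

End PS2.

Lemma Rabs_minus_le x y : Rabs (x - y) <= Rabs x + Rabs y.
Proof. unfold Rminus. eapply Rle_trans; [apply Rabs_triang|]. rewrite Rabs_Ropp. lra. Qed.

Lemma Derive_n_zero n x : Derive_n (fun _ : R => 0) n x = 0.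
Proof. destruct n; [reflexivity| apply Derive_n_const]. Qed.

Lemma Series_zero : Series (fun _ : nat => 0) = 0.
Proof.
  transitivity (Series (fun k : nat => 0 * 1)). apply Series_ext; intro; ring.
  rewrite (Series_scal_l 0 (fun _ => 1)); ring.
Qed.

Section Cont.
Variables (a b : nat -> R) (sig : R).
Hypothesis Ha : forall k, 0 < a k.
Hypothesis Hsa : forall s, sig < s -> ex_series (fun k => Rpower (a k) (- s)).
Hypothesis Hb : forall k, 0 < b k.
Hypothesis Hsb : forall s, sig < s -> ex_series (fun k => Rpower (b k) (- s)).

Lemma cont_step s0 rho eta : 0 < eta -> 0 < rho -> sig < s0 - rho ->
  (forall t, Rabs t < eta -> Zf a (s0 + t) = Zf b (s0 + t)) ->
  forall h, Rabs h < rho -> Zf a (s0 + h) = Zf b (s0 + h).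
Proof.
  intros He Hr Hsr Heq.
  set (c := fun n => coef a s0 n - coef b s0 n).
  assert (Hps : forall h, Rabs h < rho -> is_series (fun n => c n * h ^ n) (Zf a (s0 + h) - Zf b (s0 + h))).
  { intros h Hh.
    pose proof (PS_main a sig Hsa s0 rho h Hr Hsr Hh) as H1.
    pose proof (PS_main b sig Hsb s0 rho h Hr Hsr Hh) as H2.
    apply is_pseries_R in H1. apply is_pseries_R in H2.
    pose proof (is_series_minus _ _ _ _ H1 H2) as H3.
    change (plus ?x (opp ?y)) with (x - y) in H3.
    eapply is_series_ext; [| exact H3]. intro n. unfold c. simpl. ring. }
  set (KA := Series (Wt a s0 rho)). set (KB := Series (Wt b s0 rho)).
  assert (Hcb : forall n, Rabs (c n) <= / rho ^ n * (KA + KB)).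
  { intro n. unfold c. eapply Rle_trans. apply Rabs_minus_le.
    pose proof (coef_bound a sig Hsa s0 rho n Hr Hsr) as Q1.
    pose proof (coef_bound b sig Hsb s0 rho n Hr Hsr) as Q2. fold KA in Q1. fold KB in Q2.
    rewrite Rmult_plus_distr_l. lra. }
  assert (HKA : 0 <= KA).
  { apply Series_nonneg. intro k; unfold Wt; apply Rmult_le_pos; left; apply exp_pos.
    apply (Wt_ex a sig Hsa); lra. }
  assert (HKB : 0 <= KB).
  { apply Series_nonneg. intro k; unfold Wt; apply Rmult_le_pos; left; apply exp_pos.
    apply (Wt_ex b sig Hsb); lra. }
  assert (Hdisk : CV_disk c (rho / 2)).
  { unfold CV_disk.
    assert (Hh : Rabs (/ 2) < 1) by (rewrite Rabs_pos_eq; lra).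
    destruct (geom_scal (KA + KB) (/ 2) Hh) as [G1 _].
    assert (Tn : forall n, Rabs (c n * (rho / 2) ^ n) <= (KA + KB) * (/ 2) ^ n).
    2:{ apply (ex_series_R _ _ (fun n => Rle_trans _ _ _ (Req_le _ _ (Rabs_Rabsolu _)) (Tn n)) G1). }
    intro n. rewrite Rabs_mult, <- RPow_abs, (Rabs_pos_eq (rho / 2)) by lra.
    apply Rle_trans with (/ rho ^ n * (KA + KB) * (rho / 2) ^ n).
    apply Rmult_le_compat_r; [apply pow_le; lra| apply Hcb].
    right. unfold Rdiv. rewrite Rpow_mult_distr, pow_inv. field. split; apply pow_nonzero; lra. }
  assert (Hrad : Rbar_lt 0 (CV_radius c)).
  { apply Rbar_lt_le_trans with (Finite (rho / 2)). simpl; lra.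
    destruct (Lub_Rbar_correct (CV_disk c)) as [Hub _]. apply Hub. exact Hdisk. }
  assert (Hc0 : forall n, c n = 0).
  { intro n. pose proof (Derive_n_coef c n Hrad) as HD.
    assert (Hmin : 0 < Rmin eta rho) by (apply Rmin_pos; lra).
    rewrite (Derive_n_ext_loc _ (fun _ => 0)) in HD.
    - rewrite Derive_n_zero in HD. pose proof (fact_pos n).
      apply (Rmult_eq_reg_r (INR (fact n))); [| lra]. lra.
    - apply (loc0 _ (mkposreal _ Hmin)). intros t Ht. simpl in Ht.
      assert (Ht1 : Rabs t < eta) by (eapply Rlt_le_trans; [exact Ht| apply Rmin_l]).
      assert (Ht2 : Rabs t < rho) by (eapply Rlt_le_trans; [exact Ht| apply Rmin_r]).
      unfold PSeries. rewrite (is_series_unique _ _ (Hps t Ht2)).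
      rewrite Heq by exact Ht1. ring. }
  intros h Hh. pose proof (is_series_unique _ _ (Hps h Hh)) as E.
  rewrite (Series_ext _ (fun _ => 0)) in E by (intro n; rewrite Hc0; ring).
  rewrite Series_zero in E. lra.
Qed.
End Cont.

Lemma cont_all (a b : nat -> R) (sig gamma : R)
  (Hsa : forall s, sig < s -> ex_series (fun k => Rpower (a k) (- s)))
  (Hsb : forall s, sig < s -> ex_series (fun k => Rpower (b k) (- s))) :
  sig < gamma ->
  (forall s, gamma < s < gamma + 1 -> Zf a s = Zf b s) ->
  forall s, gamma < s -> Zf a s = Zf b s.
Proof.
  intros Hg Hbase.
  set (d := (gamma - sig) / 2).
  assert (Hd : 0 < d) by (unfold d; lra).
  assert (Hn : forall n, forall s, gamma < s < gamma + 1 + INR n * d -> Zf a s = Zf b s).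
  { induction n as [|n IH].
    - simpl. intros s Hs. apply Hbase. lra.
    - intros s Hs. rewrite S_INR in Hs. pose proof (pos_INR n) as Hpn.
      set (T := gamma + 1 + INR n * d) in *.
      destruct (Rlt_or_le s T) as [HsT|HsT].
      + apply IH. lra.
      + set (s0 := T - 1 / 2).
        replace s with (s0 + (s - s0)) by ring.
        apply (cont_step a b sig Hsa Hsb s0 (1 / 2 + d) (1 / 2)).
        * lra.
        * lra.
        * unfold s0, T. assert (0 <= INR n * d) by (apply Rmult_le_pos; lra). unfold d in *. lra.
        * intros t Ht. apply Rabs_def2 in Ht. apply IH. unfold s0, T. assert (0 <= INR n * d) by (apply Rmult_le_pos; lra). lra.
        * rewrite Rabs_pos_eq; unfold s0, T in *; lra. }
  intros s Hs. destruct (INR_archimed d (s - gamma) Hd) as [n Hnn].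
  apply (Hn n). lra.
Qed.

Lemma mono_le (b : nat -> R) : (forall k, b k <= b (S k)) -> forall k j, b k <= b (k + j)%nat.
Proof.
  intros H k j. induction j as [|j IH]. rewrite Nat.add_0_r; lra.
  rewrite Nat.add_succ_r. eapply Rle_trans; [exact IH| apply H].
Qed.

Lemma Series_ge_first (b : nat -> R) : (forall k, 0 <= b k) -> ex_series b -> b 0%nat <= Series b.
Proof.
  intros H Hb. rewrite Series_incr_1 by exact Hb.
  assert (0 <= Series (fun k => b (S k))).
  { apply Series_nonneg. intro; apply H. apply ex_series_incr_1 in Hb. exact Hb. }
  lra.
Qed.

Lemma HD_lt (u v : nat -> R) (sig gamma : R)
  (Hu : forall k, 0 < u k) (Hv : forall k, 0 < v k) (Hvm : forall k, v 0%nat <= v k)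
  (Hsu : forall s, sig < s -> ex_series (fun k => Rpower (u k) (- s)))
  (Hsv : forall s, sig < s -> ex_series (fun k => Rpower (v k) (- s))) :
  sig < gamma -> u 0%nat < v 0%nat ->
  ~ (forall s, gamma < s -> Zf u s = Zf v s).
Proof.
  intros Hg Hlt Heq.
  set (s1 := gamma + 1).
  set (C := Series (fun k => Rpower (v k) (- s1))).
  assert (HC1 : ex_series (fun k => Rpower (v k) (- s1))) by (apply Hsv; unfold s1; lra).
  assert (HC : 0 < C).
  { eapply Rlt_le_trans; [| apply Series_ge_first]. unfold Rpower; apply exp_pos.
    intro; left; unfold Rpower; apply exp_pos. exact HC1. }
  set (lu := ln (u 0%nat)). set (lv := ln (v 0%nat)).
  assert (Hl : lu < lv) by (apply ln_increasing; auto).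
  assert (Hlk : forall k, lv <= ln (v k)).
  { intro k. destruct (Rle_or_lt lv (ln (v k))) as [H|H]; auto.
    apply ln_lt_inv in H; auto. specialize (Hvm k). lra. }
  set (t := (Rabs (ln C + s1 * lu) + 1) / (lv - lu)).
  assert (Ht : 0 <= t).
  { unfold t. apply Rmult_le_pos. pose proof (Rabs_pos (ln C + s1 * lu)); lra.
    left; apply Rinv_0_lt_compat; lra. }
  assert (Htl : t * (lv - lu) = Rabs (ln C + s1 * lu) + 1) by (unfold t; field; lra).
  set (s := s1 + t).
  specialize (Heq s ltac:(unfold s, s1; lra)). unfold Zf in Heq.
  assert (H1 : exp (- s * lu) <= Series (fun k => Rpower (u k) (- s))).
  { apply (Series_ge_first (fun k => Rpower (u k) (- s))). intro; left; unfold Rpower; apply exp_pos.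
    apply Hsu. unfold s, s1; lra. }
  assert (H2 : Series (fun k => Rpower (v k) (- s)) <= exp (- t * lv) * C).
  { unfold C. rewrite <- Series_scal_l. apply Series_le.
    - intro k. unfold Rpower. split. left; apply exp_pos.
      replace (- s * ln (v k)) with (- s1 * ln (v k) + - t * ln (v k)) by (unfold s; ring).
      rewrite exp_plus, (Rmult_comm (exp (- t * lv))). apply Rmult_le_compat_l. left; apply exp_pos.
      assert (Hm : - t * ln (v k) <= - t * lv).
      { assert (t * lv <= t * ln (v k)) by (apply Rmult_le_compat_l; [lra| apply Hlk]). lra. }
      destruct (Rle_lt_or_eq_dec _ _ Hm) as [H|H].
      + left. apply exp_increasing. exact H.
      + rewrite H. right; reflexivity.
    - apply (ex_series_scal_l (exp (- t * lv)) (fun k => Rpower (v k) (- s1))). exact HC1. }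
  rewrite Heq in H1.
  assert (H3 : exp (- s * lu) <= exp (- t * lv + ln C)).
  { rewrite exp_plus, exp_ln by exact HC. lra. }
  assert (H4 : - t * lv + ln C < - s * lu).
  { unfold s. pose proof (Rle_abs (ln C + s1 * lu)). nra. }
  apply exp_increasing in H4. lra.
Qed.

Lemma spec_eq (a b : nat -> R) (sig gamma : R)
  (Ha : forall k, 0 < a k) (Hb : forall k, 0 < b k)
  (Ham : forall k, a k <= a (S k)) (Hbm : forall k, b k <= b (S k))
  (Hsa : forall s, sig < s -> ex_series (fun k => Rpower (a k) (- s)))
  (Hsb : forall s, sig < s -> ex_series (fun k => Rpower (b k) (- s))) :
  sig < gamma -> (forall s, gamma < s -> Zf a s = Zf b s) -> forall k, a k = b k.
Proof.
  intros Hg Heq.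
  assert (Hall : forall k, forall j, (j < k)%nat -> a j = b j).
  2:{ intro k. apply (Hall (S k)). lia. }
  induction k as [|k IH]. intros; lia.
  assert (Hk : a k = b k).
  { set (u := fun j => a (k + j)%nat). set (v := fun j => b (k + j)%nat).
    assert (Hsu : forall s, sig < s -> ex_series (fun j => Rpower (u j) (- s))).
    { intros s Hs. unfold u. apply (ex_series_incr_n (fun j => Rpower (a j) (- s)) k). auto. }
    assert (Hsv : forall s, sig < s -> ex_series (fun j => Rpower (v j) (- s))).
    { intros s Hs. unfold v. apply (ex_series_incr_n (fun j => Rpower (b j) (- s)) k). auto. }
    assert (Heq' : forall s, gamma < s -> Zf u s = Zf v s).
    { intros s Hs. specialize (Heq s Hs). unfold Zf in *. unfold u, v.
      destruct k as [|k'].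
      - simpl. exact Heq.
      - rewrite (Series_incr_n (fun j => Rpower (a j) (- s)) (S k')) in Heq by (lia || (apply Hsa; lra)).
        rewrite (Series_incr_n (fun j => Rpower (b j) (- s)) (S k')) in Heq by (lia || (apply Hsb; lra)).
        rewrite (sum_eq (fun j => Rpower (a j) (- s)) (fun j => Rpower (b j) (- s))) in Heq.
        + lra.
        + intros i Hi. simpl in Hi. rewrite (IH i) by lia. reflexivity. }
    assert (Hu0 : u 0%nat = a k) by (unfold u; f_equal; lia).
    assert (Hv0 : v 0%nat = b k) by (unfold v; f_equal; lia).
    destruct (Rtotal_order (a k) (b k)) as [H|[H|H]]; auto.
    - exfalso. apply (HD_lt u v sig gamma) ; auto.
      + intro; unfold u; auto.
      + intro; unfold v; auto.
      + intro j. rewrite Hv0. unfold v. apply mono_le; auto.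
      + lra.
    - exfalso. apply (HD_lt v u sig gamma) ; auto.
      + intro; unfold v; auto.
      + intro; unfold u; auto.
      + intro j. rewrite Hu0. unfold u. apply mono_le; auto.
      + lra.
      + intros s Hs. symmetry; auto. }
  intros j Hj. destruct (Nat.eq_dec j k) as [->|Hne]. exact Hk. apply IH. lia.
Qed.

Lemma exp_le_mono x y : x <= y -> exp x <= exp y.
Proof. intro H. destruct (Rle_lt_or_eq_dec _ _ H) as [H1|H1]. left; apply exp_increasing; auto. rewrite H1; lra. Qed.

Lemma ln_le_mono x y : 0 < x -> x <= y -> ln x <= ln y.
Proof. intros Hx H. destruct (Rle_lt_or_eq_dec _ _ H) as [H1|H1]. left; apply ln_increasing; auto. rewrite H1; lra. Qed.

Lemma lub_ub (E : R -> Prop) r : E r -> Rbar_le r (Lub_Rbar E).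
Proof. intro H. destruct (Lub_Rbar_correct E) as [H1 _]. apply H1. exact H. Qed.

Lemma lub_le (E : R -> Prop) B : (forall r, E r -> r <= B) -> Rbar_le (Lub_Rbar E) B.
Proof. intro H. destruct (Lub_Rbar_correct E) as [_ H2]. apply H2. intros x Hx. simpl. apply H; auto. Qed.

Lemma zeta_bounds (X : SpecManifold) (gamma : R) :
  admissible X -> INR (sm_dim X) < 2 * gamma ->
  exists L U, 0 < L /\ forall s, gamma < s < gamma + 1 -> L <= zeta X s <= U.
Proof.
  intros [Hd [Hp [Hm Hs]]] Hg.
  assert (Hd0 : 0 <= INR (sm_dim X)) by apply pos_INR.
  set (a := sm_eig X) in *.
  exists (exp (- (gamma + 1) * Rabs (ln (a 0%nat)))).
  exists (Series (fun k => Rpower (a k) (- gamma) + Rpower (a k) (- (gamma + 1)))).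
  split. apply exp_pos.
  intros s Hs1. unfold zeta. fold a. split.
  - eapply Rle_trans; [| apply Series_ge_first].
    + unfold Rpower. apply exp_le_mono.
      assert (ln (a 0%nat) <= Rabs (ln (a 0%nat))) by apply Rle_abs.
      assert (- ln (a 0%nat) <= Rabs (ln (a 0%nat))) by (rewrite <- Rabs_Ropp; apply Rle_abs).
      pose proof (Rabs_pos (ln (a 0%nat))). nra.
    + intro; left; unfold Rpower; apply exp_pos.
    + apply Hs. lra.
  - apply Series_le.
    + intro k. split. left; unfold Rpower; apply exp_pos.
      unfold Rpower. pose proof (exp_pos (- gamma * ln (a k))). pose proof (exp_pos (- (gamma + 1) * ln (a k))).
      destruct (Rle_or_lt 0 (ln (a k))).
      * assert (exp (- s * ln (a k)) <= exp (- gamma * ln (a k))) by (apply exp_le_mono; nra). lra.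
      * assert (exp (- s * ln (a k)) <= exp (- (gamma + 1) * ln (a k))) by (apply exp_le_mono; nra). lra.
    + apply (ex_series_plus (fun k => Rpower (a k) (- gamma)) (fun k => Rpower (a k) (- (gamma + 1)))); apply Hs; lra.
Qed.

Lemma e_eq x y : 0 < x -> 0 < y -> Rabs (ln (Rabs (x / y))) = Rabs (ln x - ln y).
Proof.
  intros Hx Hy. rewrite (Rabs_pos_eq (x / y)) by (left; apply Rdiv_lt_0_compat; auto). rewrite ln_div; auto.
Qed.

Lemma ln_abs_bound L U z : 0 < L -> L <= z <= U -> Rabs (ln z) <= Rabs (ln L) + Rabs (ln U).
Proof.
  intros HL [H1 H2]. assert (ln L <= ln z) by (apply ln_le_mono; auto).
  assert (ln z <= ln U) by (apply ln_le_mono; lra).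
  pose proof (Rle_abs (ln U)). pose proof (Rle_abs (- ln L)) as Q. rewrite Rabs_Ropp in Q.
  pose proof (Rabs_pos (ln L)). pose proof (Rabs_pos (ln U)).
  apply Rabs_le. lra.
Qed.

Theorem proposition2 (M : SpecManifold -> Prop) (gamma : R)
  (hM : forall X, M X -> admissible X)
  (hdim : forall X, M X -> INR (sm_dim X) < 2 * gamma) :
  (forall X Y, M X -> M Y -> is_finite (zeta_dist gamma X Y)) /\
  (forall X Y, M X -> M Y -> Rbar_le (Finite 0) (zeta_dist gamma X Y)) /\
  (forall X Y, M X -> M Y -> zeta_dist gamma X Y = zeta_dist gamma Y X) /\
  (forall X Y Z, M X -> M Y -> M Z ->
     Rbar_le (zeta_dist gamma X Z)
             (Rbar_plus (zeta_dist gamma X Y) (zeta_dist gamma Y Z))) /\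
  (forall X Y, M X -> M Y ->
     (zeta_dist gamma X Y = Finite 0 <-> isospectral X Y)).
Proof.
  assert (Hpos : forall X s, M X -> gamma < s < gamma + 1 -> 0 < zeta X s).
  { intros X s HX Hs. destruct (zeta_bounds X gamma (hM X HX) (hdim X HX)) as [L [U [HL HB]]].
    specialize (HB s Hs). lra. }
  assert (Hmid : gamma < gamma + 1 / 2 < gamma + 1) by lra.
  assert (Hnn : forall X Y, M X -> M Y -> Rbar_le (Finite 0) (zeta_dist gamma X Y)).
  { intros X Y HX HY. unfold zeta_dist.
    eapply Rbar_le_trans; [| apply lub_ub; exists (gamma + 1 / 2); split; [exact Hmid| reflexivity]].
    simpl. apply Rabs_pos. }
  assert (Hfin : forall X Y, M X -> M Y -> is_finite (zeta_dist gamma X Y)).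
  { intros X Y HX HY.
    destruct (zeta_bounds X gamma (hM X HX) (hdim X HX)) as [LX [UX [HLX HBX]]].
    destruct (zeta_bounds Y gamma (hM Y HY) (hdim Y HY)) as [LY [UY [HLY HBY]]].
    assert (Hle : Rbar_le (zeta_dist gamma X Y) (Finite (Rabs (ln LX) + Rabs (ln UX) + (Rabs (ln LY) + Rabs (ln UY))))).
    { unfold zeta_dist. apply lub_le. intros r [s [Hs ->]].
      rewrite e_eq by (apply Hpos; auto).
      eapply Rle_trans; [apply Rabs_minus_le|].
      apply Rplus_le_compat; apply (ln_abs_bound); auto. }
    pose proof (Hnn X Y HX HY) as H0.
    destruct (zeta_dist gamma X Y); simpl in *; try contradiction; reflexivity. }
  assert (Hle_d : forall X Y s, M X -> M Y -> gamma < s < gamma + 1 ->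
             Rabs (ln (zeta X s) - ln (zeta Y s)) <= real (zeta_dist gamma X Y)).
  { intros X Y s HX HY Hs.
    assert (H := lub_ub (fun r => exists s, gamma < s < gamma + 1 /\ r = Rabs (ln (Rabs (zeta X s / zeta Y s))))
              (Rabs (ln (Rabs (zeta X s / zeta Y s)))) (ex_intro _ s (conj Hs eq_refl))).
    fold (zeta_dist gamma X Y) in H. rewrite <- (Hfin X Y HX HY) in H. simpl in H.
    rewrite e_eq in H by (apply Hpos; auto). exact H. }
  split; [exact Hfin|]. split; [exact Hnn|]. split.
  { intros X Y HX HY. unfold zeta_dist. apply Lub_Rbar_eqset. intro r. split.
    - intros [s [Hs ->]]. exists s. split; auto. rewrite !e_eq by (apply Hpos; auto). apply Rabs_minus_sym.
    - intros [s [Hs ->]]. exists s. split; auto. rewrite !e_eq by (apply Hpos; auto). apply Rabs_minus_sym. }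
  split.
  { intros X Y Z HX HY HZ.
    rewrite <- (Hfin X Y HX HY), <- (Hfin Y Z HY HZ). simpl.
    unfold zeta_dist at 1. apply lub_le. intros r [s [Hs ->]].
    rewrite e_eq by (apply Hpos; auto).
    pose proof (Hle_d X Y s HX HY Hs). pose proof (Hle_d Y Z s HY HZ Hs).
    replace (ln (zeta X s) - ln (zeta Z s)) with ((ln (zeta X s) - ln (zeta Y s)) + (ln (zeta Y s) - ln (zeta Z s))) by ring.
    eapply Rle_trans; [apply Rabs_triang|]. lra. }
  intros X Y HX HY. split.
  - intros H0.
    destruct (hM X HX) as [_ [HpX [HmX HsX]]]. destruct (hM Y HY) as [_ [HpY [HmY HsY]]].
    set (sig := Rmax (INR (sm_dim X) / 2) (INR (sm_dim Y) / 2)).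
    assert (Hsig : sig < gamma).
    { unfold sig. apply Rmax_lub_lt. pose proof (hdim X HX); lra. pose proof (hdim Y HY); lra. }
    assert (HsX' : forall s, sig < s -> ex_series (fun k => Rpower (sm_eig X k) (- s))).
    { intros s Hs. apply HsX. pose proof (Rmax_l (INR (sm_dim X) / 2) (INR (sm_dim Y) / 2)). unfold sig in Hs. lra. }
    assert (HsY' : forall s, sig < s -> ex_series (fun k => Rpower (sm_eig Y k) (- s))).
    { intros s Hs. apply HsY. pose proof (Rmax_r (INR (sm_dim X) / 2) (INR (sm_dim Y) / 2)). unfold sig in Hs. lra. }
    intro k. apply (spec_eq (sm_eig X) (sm_eig Y) sig gamma); auto.
    apply (cont_all (sm_eig X) (sm_eig Y) sig gamma); auto.
    intros s Hs. pose proof (Hle_d X Y s HX HY Hs) as H. rewrite H0 in H. simpl in H.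
    pose proof (Rabs_pos (ln (zeta X s) - ln (zeta Y s))).
    assert (Hz : Rabs (ln (zeta X s) - ln (zeta Y s)) = 0) by lra.
    apply Rabs_eq_0 in Hz. apply ln_inv. apply Hpos; auto. apply Hpos; auto. unfold Zf. fold (zeta X s) (zeta Y s). lra.
  - intros Hiso. apply Rbar_le_antisym; [| exact (Hnn X Y HX HY)].
    unfold zeta_dist. apply lub_le. intros r [s [Hs ->]].
    rewrite e_eq by (apply Hpos; auto).
    assert (E : zeta X s = zeta Y s) by (unfold zeta; apply Series_ext; intro n; rewrite (Hiso n); reflexivity).
    rewrite E. replace (ln (zeta Y s) - ln (zeta Y s)) with 0 by ring. rewrite Rabs_R0. lra.
Qed.
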